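(* Let $M,K,T$ be positive integers, $P_{\max}>0$, and fix a device index $k\in\{1,\dots,K\}$ with constants $\sigma_k^2>0$, $\delta_k^2>0$, $\omega_k^2>0$ and a power-splitting ratio $\rho_k\in(0,1]$. Let $\hat{\mathbf H}=[\hat{\bm h}_1,\dots,\hat{\bm h}_K]\in\mathbb C^{M\times K}$ be a random matrix with $\mathbb E[\|\hat{\bm h}_k\|^2]<\infty$, and let $\bm\phi_k\sim\mathcal{CN}(0,\omega_k^2\mathbf I_M)$ be independent of $\hat{\mathbf H}$; set $\bm h_k=\hat{\bm h}_k+\bm\phi_k$. Let $\bm\Theta$ be a (measurable) beamforming policy, i.e. a map $\hat{\mathbf H}\mapsto \mathbf F(\hat{\mathbf H})=[\bm f_1,\dots,\bm f_K]\in\mathbb C^{M\times K}$ with $\mathrm{Tr}(\mathbf F\mathbf F^H)\le P_{\max}$ for every $\hat{\mathbf H}$. Define the SINR \[ \Gamma_k=\frac{\rho_k|\bm h_k^H\bm f_k|^2}{\rho_k\big(\sum_{m\neq k}|\bm h_k^H\bm f_m|^2+\sigma_k^2\big)+\delta_k^2}, \] the quantity $\overline r_k(\rho_k,\bm\Theta)=\mathbb E_{\hat{\mathbf H},\bm\phi_k}[\log_2(1+\Gamma_k)]$, and the ergodic rate \[ \hat r_k^\circ(\rho_k,\bm\Theta)=\overline r_k(\rho_k,\bm\Theta)-\frac1T\sum_{m=1}^K\log_2\!\Big(1+\frac{T}{\rho_k\sigma_k^2+\delta_k^2}\,\mathrm{Var}(\bm h_k^H\bm f_m)\Big), \] where $\mathrm{Var}(X)=\mathbb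 E|X-\mathbb E X|^2$ is taken over the joint distribution of $(\hat{\mathbf H},\bm\phi_k)$. Then \[ \overline r_k(\rho_k,\bm\Theta)-\frac1T\sum_{m=1}^K\log_2\!\Big(1+\frac{TP_{\max}}{\delta_k^2}\,\mathbb E_{\hat{\mathbf H},\bm\phi_k}\big[\|\hat{\bm h}_k+\bm\phi_k\|^2\big]\Big)\;\le\;\hat r_k^\circ(\rho_k,\bm\Theta)\;\le\;\overline r_k(\rho_k,\bm\Theta). \]
   Context: Setting: downlink of a multi-antenna base station with $M$ antennas serving $K$ single-antenna devices; $\bm f_m$ is the beamformer for device $m$, $\rho_k$ is the fraction of received power sent to the information decoder of device $k$, $\sigma_k^2$ is the antenna noise variance, $\delta_k^2$ is the decoder noise variance, $\hat{\bm h}_k$ is the estimated channel and $\bm\phi_k$ the channel estimation error, $T$ is the channel coherence length. $\mathcal{CN}(0,\omega_k^2\mathbf I_M)$ denotes the circularly symmetric complex Gaussian distribution. *)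

(* Defs.v *)
From HB Require Import structures.
From mathcomp Require Import all_boot all_order all_algebra.
From mathcomp Require Import all_classical all_reals all_analysis.
From mathcomp Require Import complex.
Set Implicit Arguments. Unset Strict Implicit. Unset Printing Implicit Defensive.
Import Order.TTheory GRing.Theory Num.Theory.
Local Open Scope classical_set_scope.
Local Open Scope ring_scope.

Section defs.
Variable R : realType.

Definition log2 (x : R) : R := ln x / ln 2.

Definition csq (z : R[i]) : R := complex.Re z ^+ 2 + complex.Im z ^+ 2.

Definition cinner (M : nat) (h f : 'I_M -> R[i]) : R[i] :=
  \sum_(i < M) conjc (h i) * f i.

Definition vnorm2 (M : nat) (h : 'I_M -> R[i]) : R := \sum_(i < M) csq (h i).

Definition herm (M K : nat) (F : 'M[R[i]]_(M, K)) : 'M[R[i]]_(K, M) :=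
  (map_mx conjc F)^T.

Variables (d : measure_display) (Omega : measurableType d)
          (P : probability Omega R).

(* real expectation (the integral is shown finite in all uses) *)
Definition Ex (X : Omega -> R) : R := Rintegral P setT X.

Definition cEx (X : Omega -> R[i]) : R[i] :=
  Complex (Ex (fun w => complex.Re (X w))) (Ex (fun w => complex.Im (X w))).

Definition cVar (X : Omega -> R[i]) : R := Ex (fun w => csq (X w - cEx X)).

Definition cmeasurable (X : Omega -> R[i]) : Prop :=
  measurable_fun setT (fun w => complex.Re (X w)) /\
  measurable_fun setT (fun w => complex.Im (X w)).

(* Hhat (M x K complex random matrix) and phi (complex random M-vector) are
   independent and phi ~ CN(0, omega2 I_M), i.e. the 2M real coordinates of
   phi are i.i.d. N(0, omega2/2).  Stated on the generating pi-system of
   measurable rectangles in all real coordinates. *)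
Definition indep_CN_noise (M K : nat) (omega2 : R)
    (Hhat : Omega -> 'M[R[i]]_(M, K)) (phi : Omega -> 'I_M -> R[i]) : Prop :=
  forall (A B : 'I_M -> 'I_K -> set R) (C D : 'I_M -> set R),
    (forall i j, measurable (A i j)) -> (forall i j, measurable (B i j)) ->
    (forall i, measurable (C i)) -> (forall i, measurable (D i)) ->
    P ([set w | forall i j, A i j (complex.Re (Hhat w i j)) /\
                            B i j (complex.Im (Hhat w i j))] `&`
       [set w | forall i, C i (complex.Re (phi w i)) /\
                          D i (complex.Im (phi w i))]) =
    (P [set w | forall i j, A i j (complex.Re (Hhat w i j)) /\
                            B i j (complex.Im (Hhat w i j))] *
     \prod_(i < M) (normal_prob 0 (Num.sqrt (omega2 / 2)) (C i) *
                    normal_prob 0 (Num.sqrt (omega2 / 2)) (D i)))%E.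

End defs.

(* Main.v *)
Require Import Defs.
From HB Require Import structures.
From mathcomp Require Import all_boot all_order all_algebra.
From mathcomp Require Import all_classical all_reals all_analysis.
From mathcomp Require Import complex.
From mathcomp Require Import measurable_realfun.
From mathcomp Require Import ring lra.
Import Order.TTheory GRing.Theory Num.Theory.
Local Open Scope classical_set_scope.
Local Open Scope ring_scope.
Section density.
Local Open Scope ereal_scope.
Context d (T : measurableType d) (R : realType).
Variables (mu nu : {measure set T -> \bar R}) (g : T -> R).
Hypothesis mg : measurable_fun setT g.
Hypothesis g0 : forall x, (0 <= g x)%R.
Hypothesis nuE : forall A, measurable A -> nu A = \int[mu]_(x in A) (g x)%:E.

Import HBNNSimple.

Lemma density_nnsfun (h : {nnsfun T >-> R}) :
  \int[nu]_x (h x)%:E = \int[mu]_x ((h x)%:E * (g x)%:E).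
Proof.
have mh r : measurable (h @^-1` [set r]) by rewrite -(setTI (_ @^-1` _)); exact: measurable_funP.
transitivity (\sum_(r \in range h) \int[nu]_x (r * \1_(h @^-1` [set r]) x)%:E).
  under eq_integral do rewrite fimfunE -fsumEFin//.
  rewrite ge0_integral_fsum//.
  - by move=> r; exact/measurable_EFinP/measurable_funM.
  - by move=> r x _; rewrite nnfun_muleindic_ge0.
transitivity (\sum_(r \in range h) \int[mu]_x (r * \1_(h @^-1` [set r]) x * g x)%:E).
  apply: eq_fsbigr => r /set_mem [y _ <-].
  rewrite integralZl_indic_nnsfun// integral_indic// setIT nuE//.
  rewrite integral_mkcond -ge0_integralZl_EFin//.
  - apply: eq_integral => x _; rewrite /patch /= indicE.
    by case: ifPn => _; rewrite ?mulr1 ?mulr0 ?mul0r ?mule0 -?EFinM.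
  - by move=> x _; rewrite /patch; case: ifP => _ //; rewrite lee_fin.
  - apply/(measurable_restrictT _ _).1 => //.
    exact/measurable_EFinP/measurable_funTS.
rewrite -ge0_integral_fsum//.
- apply: eq_integral => x _; rewrite fsumEFin// -EFinM; congr (_%:E).
  by rewrite [h x]fimfunE mulr_fsuml.
- move=> r; apply/measurable_EFinP; apply: measurable_funM => //.
  exact: measurable_funM.
- move=> r x _; rewrite lee_fin mulr_ge0//.
  by have := nnfun_muleindic_ge0 h r x; rewrite -EFinM lee_fin.
Qed.

Lemma density_ge0 (f : T -> \bar R) : measurable_fun setT f ->
  (forall x, 0 <= f x) -> \int[nu]_x f x = \int[mu]_x (f x * (g x)%:E).
Proof.
move=> mf f0.
pose f_ := nnsfun_approx measurableT mf.
have cf x : (EFin \o (fun n => f_ n x)) n @[n --> \oo] --> f x.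
  exact: cvg_nnsfun_approx.
transitivity (limn (fun n => \int[nu]_x (f_ n x)%:E)).
  rewrite -monotone_convergence//.
  - by apply: eq_integral => x _; apply/esym/cvg_lim => //; exact: cf.
  - by move=> n; exact/measurable_EFinP/measurable_funP.
  - by move=> n x _; rewrite lee_fin.
  - by move=> x _ m n mn; rewrite lee_fin; exact/lefP/nd_nnsfun_approx.
transitivity (limn (fun n => \int[mu]_x ((f_ n x)%:E * (g x)%:E))).
  have -> : (fun n => \int[nu]_x (f_ n x)%:E) =
            (fun n => \int[mu]_x ((f_ n x)%:E * (g x)%:E)) by apply/funext => n; exact: density_nnsfun.
  by [].
rewrite -monotone_convergence//.
- apply: eq_integral => x _; apply/cvg_lim => //.
  have [->|gx0] := eqVneq (g x) 0%R.
    rewrite mule0; under eq_fun do rewrite mule0; exact: cvg_cst.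
  apply: cvgeM; last exact: cvg_cst.
    have [fin|nfin] := boolP (f x \is a fin_num).
      exact: mule_def_fin.
    by apply: mule_def_infty_neq0; rewrite // eqe.
  exact: cf.
- move=> n; apply/measurable_EFinP; apply: measurable_funM; last exact: mg.
  exact: measurable_funP.
- by move=> n x _; rewrite -EFinM lee_fin mulr_ge0.
- move=> x _ m n mn; rewrite -!EFinM lee_fin ler_wpM2r//.
  exact/lefP/nd_nnsfun_approx.
Qed.
End density.


Lemma sq_exp_bound (R : realType) (w x : R) : 0 < w ->
  x ^+ 2 * expR (- (x - 0) ^+ 2 / (Num.sqrt (w / 2) ^+ 2 *+ 2)) <=
  (2 * w) * expR (- (x - 0) ^+ 2 / (Num.sqrt w ^+ 2 *+ 2)).
Proof.
move=> w0.
rewrite !subr0 !sqr_sqrtr ?(ltW w0) ?divr_ge0 ?(ltW w0) //.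
set y := x ^+ 2 / (w *+ 2).
have y0 : 0 <= y by rewrite divr_ge0 ?sqr_ge0 // mulrn_wge0 // ltW.
have -> : - x ^+ 2 / (w / 2 *+ 2) = - y - y.
  rewrite /y; field; by rewrite gt_eqF.
have -> : - x ^+ 2 / (w *+ 2) = - y by rewrite /y mulNr.
have xy : x ^+ 2 = 2 * w * y by rewrite /y; field; rewrite gt_eqF.
rewrite xy expRD -mulrA ler_wpM2l ?mulr_ge0 ?(ltW w0) //.
rewrite mulrA ler_piMl ?expR_ge0 // expRN.
rewrite ler_pdivrMr ?expR_gt0 // mul1r.
apply: le_trans (expR_ge1Dx y); lra.
Qed.

Lemma normal_sq_fin (R : realType) (w : R) : 0 < w ->
  (\int[normal_prob 0 (Num.sqrt (w / 2))]_x ((x ^+ 2)%:E) < +oo)%E.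
Proof.
move=> w0.
set s := Num.sqrt (w / 2); set s' := Num.sqrt w.
have s0 : s != 0 by rewrite gt_eqF // sqrtr_gt0 divr_gt0.
have s'0 : s' != 0 by rewrite gt_eqF // sqrtr_gt0.
rewrite (@density_ge0 _ _ _ lebesgue_measure (normal_prob 0 s) (normal_pdf 0 s)
  (measurable_normal_pdf 0 s) (normal_pdf_ge0 0 s) (fun A _ => erefl)); last first.
- by move=> x; rewrite lee_fin sqr_ge0.
- by apply/measurable_EFinP; apply: measurable_funX.
set c := 2 * w * normal_peak s / normal_peak s'.
have c0 : 0 <= c by rewrite divr_ge0 ?normal_peak_ge0 // mulr_ge0 ?normal_peak_ge0 // mulr_ge0 // ltW.
apply: (le_lt_trans (y := (\int[lebesgue_measure]_x (c%:E * (normal_pdf 0 s' x)%:E))%E)).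
  apply: ge0_le_integral => //.
  - by move=> x _; rewrite -EFinM lee_fin mulr_ge0 ?sqr_ge0 ?normal_pdf_ge0.
  - apply/measurable_EFinP; apply: measurable_funM; first exact: measurable_funX.
    exact: measurable_normal_pdf.
  - apply/measurable_EFinP; apply: measurable_funM => //.
    exact: measurable_normal_pdf.
  - move=> x _; rewrite -!EFinM lee_fin !normal_pdfE // /c /normal_fun.
    have p0 : 0 < normal_peak s by exact: normal_peak_gt0.
    have p'0 : 0 < normal_peak s' by exact: normal_peak_gt0.
    have := @sq_exp_bound R w x w0; rewrite -/s -/s'.
    set A := expR _; set B := expR _ => h.
    have -> : 2 * w * normal_peak s / normal_peak s' * (normal_peak s' * B) =
              normal_peak s * (2 * w * B) by field; rewrite gt_eqF.
    by rewrite mulrCA ler_wpM2l // ltW.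
rewrite ge0_integralZl_EFin //.
- by rewrite integral_normal_pdf mule1 ltry.
- by move=> x _; rewrite lee_fin normal_pdf_ge0.
- by apply/measurable_EFinP; exact: measurable_normal_pdf.
Qed.


Lemma Re_sum (R : rcfType) (n : nat) (F : 'I_n -> R[i]) :
  complex.Re (\sum_(i < n) F i) = \sum_(i < n) complex.Re (F i).
Proof.
elim/big_rec2: _ => // i y x _ <-.
by case: (F i) => a b; case: x => c e.
Qed.

Lemma Im_sum (R : rcfType) (n : nat) (F : 'I_n -> R[i]) :
  complex.Im (\sum_(i < n) F i) = \sum_(i < n) complex.Im (F i).
Proof.
elim/big_rec2: _ => // i y x _ <-.
by case: (F i) => a b; case: x => c e.
Qed.

Lemma Re_conjM (R : rcfType) (x y : R[i]) :
  complex.Re (conjc x * y) = complex.Re x * complex.Re y + complex.Im x * complex.Im y.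
Proof. by case: x => a b; case: y => c e /=; ring. Qed.

Lemma Im_conjM (R : rcfType) (x y : R[i]) :
  complex.Im (conjc x * y) = complex.Re x * complex.Im y - complex.Im x * complex.Re y.
Proof. by case: x => a b; case: y => c e /=; ring. Qed.

Lemma cs_real (R : realFieldType) n (a b c e : 'I_n -> R) :
  (\sum_(i < n) (a i * c i + b i * e i)) ^+ 2 +
  (\sum_(i < n) (a i * e i - b i * c i)) ^+ 2 <=
  (\sum_(i < n) (a i ^+ 2 + b i ^+ 2)) * (\sum_(i < n) (c i ^+ 2 + e i ^+ 2)).
Proof.
set X := \sum_(i < n) _; set Y := \sum_(i < n) _.
set A := \sum_(i < n) _; set B := \sum_(i < n) _.
have key : 0 <= \sum_(i < n) ((B * a i - X * c i - Y * e i) ^+ 2 +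
                              (B * b i - X * e i + Y * c i) ^+ 2).
  by apply: sumr_ge0 => i _; rewrite addr_ge0 // sqr_ge0.
have eq : \sum_(i < n) ((B * a i - X * c i - Y * e i) ^+ 2 +
                        (B * b i - X * e i + Y * c i) ^+ 2) =
          B * (B * A - X ^+ 2 - Y ^+ 2).
  rewrite (eq_bigr (fun i => B ^+ 2 * (a i ^+ 2 + b i ^+ 2) +
      (X ^+ 2 + Y ^+ 2) * (c i ^+ 2 + e i ^+ 2) -
      (2 * B * X) * (a i * c i + b i * e i) -
      (2 * B * Y) * (a i * e i - b i * c i))); last by move=> i _; ring.
  rewrite !big_split /= !sumrN -!mulr_sumr -/X -/Y -/A -/B; ring.
have B0 : 0 <= B by apply: sumr_ge0 => i _; rewrite addr_ge0 // sqr_ge0.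
have A0 : 0 <= A by apply: sumr_ge0 => i _; rewrite addr_ge0 // sqr_ge0.
rewrite le_eqVlt in B0; case/orP: B0 => [/eqP B0|B0].
  have ce i : c i = 0 /\ e i = 0.
    have := @psumr_eq0P _ _ _ _ (fun j _ => addr_ge0 (sqr_ge0 (c j)) (sqr_ge0 (e j))) (esym B0) i isT.
    move=> h; have c2 : c i ^+ 2 = 0.
      by apply/eqP; rewrite eq_le sqr_ge0 andbT; have := sqr_ge0 (e i); lra.
    have e2 : e i ^+ 2 = 0 by lra.
    by split; apply/eqP; rewrite -sqrf_eq0 ?c2 ?e2.
  have -> : X = 0 by rewrite /X big1 // => i _; case: (ce i) => -> ->; ring.
  have -> : Y = 0 by rewrite /Y big1 // => i _; case: (ce i) => -> ->; ring.
  rewrite -B0; lra.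
have h : 0 <= B * A - X ^+ 2 - Y ^+ 2.
  by rewrite -(pmulr_rge0 _ B0) -eq.
lra.
Qed.

Lemma cs_cinner (R : realType) M (h f : 'I_M -> R[i]) :
  csq (cinner h f) <= vnorm2 h * vnorm2 f.
Proof.
rewrite /csq /cinner /vnorm2 Re_sum Im_sum.
under eq_bigr do rewrite Re_conjM.
under [X in _ + X ^+ 2]eq_bigr do rewrite Im_conjM.
exact: cs_real.
Qed.

Lemma Re_mulJ (R : realType) (x : R[i]) : complex.Re (x * conjc x) = csq x.
Proof. by rewrite /csq; case: x => a b /=; ring. Qed.

Lemma csq_ge0 (R : realType) (x : R[i]) : 0 <= csq x.
Proof. by rewrite /csq addr_ge0 // sqr_ge0. Qed.

Lemma col_norm_le (R : realType) M K (F : 'M[R[i]]_(M, K)) (m : 'I_K) Pmax :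
  \tr (F *m herm F) <= Pmax%:C%C -> vnorm2 (fun i => F i m) <= Pmax.
Proof.
rewrite lecE => /andP [_ h].
apply: le_trans h.
rewrite /mxtrace Re_sum /vnorm2.
apply: ler_sum => i _.
rewrite mxE Re_sum (bigD1 m) //= /herm !mxE Re_mulJ lerDl.
apply: sumr_ge0 => j _; rewrite !mxE Re_mulJ; exact: csq_ge0.
Qed.


Section prob.
Context (R : realType) (d : measure_display) (Omega : measurableType d)
  (P : probability Omega R).

Local Notation Int f := (P.-integrable setT (EFin \o f)).

Lemma Int_bound (f g : Omega -> R) : measurable_fun setT f ->
  (forall w, `|f w| <= g w) -> Int g -> Int f.
Proof.
move=> mf fg ig; apply: le_integrable ig => //.
  exact/measurable_EFinP.
move=> w _ /=; rewrite lee_fin (le_trans (fg w)) //.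
exact: ler_norm.
Qed.

Lemma IntD (f g : Omega -> R) : Int f -> Int g -> Int (fun w => f w + g w).
Proof.
move=> hf hg; have := integrableD measurableT hf hg.
by apply: eq_integrable => // w _; rewrite /= EFinD.
Qed.

Lemma IntZ (k : R) (f : Omega -> R) : Int f -> Int (fun w => k * f w).
Proof.
move=> hf; have := integrableZl measurableT k hf.
by apply: eq_integrable => // w _; rewrite /= EFinM.
Qed.

Lemma Int_cst (k : R) : Int (fun _ : Omega => k).
Proof. exact: finite_measure_integrable_cst. Qed.

Lemma Int_sum (n : nat) (f : 'I_n -> Omega -> R) :
  (forall i, Int (f i)) -> Int (fun w => \sum_(i < n) f i w).
Proof.
move=> hf; have := @integrable_sum _ _ _ P setT measurableT _ (index_enum 'I_n) predT
  (fun i w => (f i w)%:E) (fun i _ => hf i).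
by apply: eq_integrable => // w _; rewrite /= -sumEFin.
Qed.

Lemma Int_of_fin (f : Omega -> R) : measurable_fun setT f -> (forall w, 0 <= f w) ->
  (\int[P]_w (f w)%:E < +oo)%E -> Int f.
Proof.
move=> mf f0 fin; apply/integrableP; split; first exact/measurable_EFinP.
under eq_integral do rewrite /= ger0_norm //.
by [].
Qed.

Lemma Int_X (X : Omega -> R) : measurable_fun setT X ->
  Int (fun w => X w ^+ 2) -> Int X.
Proof.
move=> mX i2; apply: (@Int_bound _ (fun w => 1 + X w ^+ 2)) => //.
  move=> w; rewrite ler_norml; apply/andP; split; nra.
by apply: IntD => //; exact: Int_cst.
Qed.

Lemma var_eq (X : Omega -> R) : measurable_fun setT X ->
  Int (fun w => X w ^+ 2) ->
  Ex P (fun w => (X w - Ex P X) ^+ 2) = Ex P (fun w => X w ^+ 2) - Ex P X ^+ 2.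
Proof.
move=> mX i2; have i1 := Int_X X mX i2.
set a := Ex P X.
have -> : (fun w => (X w - a) ^+ 2) = (fun w => (X w ^+ 2 + (- 2 * a) * X w) + a ^+ 2).
  by apply/funext => w; ring.
rewrite /Ex RintegralD //; last 2 first.
- by apply: IntD => //; exact: IntZ.
- exact: Int_cst.
rewrite RintegralD //; last exact: IntZ.
rewrite RintegralZl // Rintegral_cst //.
have -> : fine (P [set: Omega]) = 1 by rewrite probability_setT.
have -> : (\int[P]_x X x)%R = a by [].
ring.
Qed.


Lemma csq_sub (z : R[i]) (a b : R) :
  csq (z - Complex a b) = (complex.Re z - a) ^+ 2 + (complex.Im z - b) ^+ 2.
Proof. by case: z. Qed.

Lemma Int_sqB (X : Omega -> R) (a : R) : measurable_fun setT X ->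
  Int (fun w => X w ^+ 2) -> Int (fun w => (X w - a) ^+ 2).
Proof.
move=> mX i2; apply: (@Int_bound _ (fun w => 2 * X w ^+ 2 + 2 * a ^+ 2)).
- by apply: measurable_funX; apply: measurable_funB.
- move=> w; rewrite ger0_norm ?sqr_ge0 //; have := sqr_ge0 (X w + a); nra.
- by apply: IntD; [exact: IntZ | exact: Int_cst].
Qed.

Lemma cvar_le (Z : Omega -> R[i]) : cmeasurable Z ->
  Int (fun w => csq (Z w)) -> cVar P Z <= Ex P (fun w => csq (Z w)).
Proof.
case=> mX mY iZ.
set X := fun w => complex.Re (Z w); set Y := fun w => complex.Im (Z w).
have iX2 : Int (fun w => X w ^+ 2).
  apply: (@Int_bound _ (fun w => csq (Z w))) => //; first exact: measurable_funX.
  by move=> w; rewrite ger0_norm ?sqr_ge0 // /csq lerDl sqr_ge0.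
have iY2 : Int (fun w => Y w ^+ 2).
  apply: (@Int_bound _ (fun w => csq (Z w))) => //; first exact: measurable_funX.
  by move=> w; rewrite ger0_norm ?sqr_ge0 // /csq lerDr sqr_ge0.
rewrite /cVar /cEx.
rewrite (_ : (fun w => csq (Z w - Complex (Ex P (fun w => complex.Re (Z w)))
                                         (Ex P (fun w => complex.Im (Z w))))) =
   fun w => (X w - Ex P X) ^+ 2 + (Y w - Ex P Y) ^+ 2); last first.
  by apply/funext => w; rewrite csq_sub.
rewrite [X in X <= _]/Ex RintegralD //; last 2 first.
- exact: Int_sqB.
- exact: Int_sqB.
rewrite -/(Ex P _) -/(Ex P _) !var_eq //.
rewrite (_ : (fun w => csq (Z w)) = fun w => X w ^+ 2 + Y w ^+ 2) //.
rewrite /Ex RintegralD // -/(Ex P _) -/(Ex P _).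
have := sqr_ge0 (Ex P X); have := sqr_ge0 (\int[P]_x Y x)%R; lra.
Qed.

End prob.


Lemma normal_setT (R : realType) (s : R) : normal_prob 0 s [set: R] = 1%E.
Proof. exact: probability_setT. Qed.

Lemma phi_dist (R : realType) (d : measure_display) (Omega : measurableType d)
  (P : probability Omega R) M K omega2 (Hhat : Omega -> 'M[R[i]]_(M, K))
  (phi : Omega -> 'I_M -> R[i]) (i : 'I_M) :
  indep_CN_noise P omega2 Hhat phi ->
  (forall E, measurable E -> P ((fun w => complex.Re (phi w i)) @^-1` E) =
     normal_prob 0 (Num.sqrt (omega2 / 2)) E) /\
  (forall E, measurable E -> P ((fun w => complex.Im (phi w i)) @^-1` E) =
     normal_prob 0 (Num.sqrt (omega2 / 2)) E).
Proof.
move=> ind; split => E mE.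
- have := ind (fun _ _ => setT) (fun _ _ => setT)
    (fun j => if j == i then E else setT) (fun _ => setT).
  move=> /(_ (fun _ _ => measurableT) (fun _ _ => measurableT)).
  move=> /(_ (fun j => ltac:(by case: ifP))) /(_ (fun _ => measurableT)).
  rewrite (_ : [set w | forall i0 j, setT (complex.Re (Hhat w i0 j)) /\
                                      setT (complex.Im (Hhat w i0 j))] = setT); last first.
    by apply/seteqP; split => w //=.
  rewrite setTI probability_setT mul1e.
  rewrite (_ : [set w | _] = (fun w => complex.Re (phi w i)) @^-1` E); last first.
    apply/seteqP; split => w /=.
      by move=> /(_ i); rewrite eqxx => -[].
    by move=> Ew j; split => //; case: ifP => // /eqP ->.
  move=> ->; rewrite (bigD1 i) //= eqxx big1 ?mule1 ?normal_setT ?mule1 //.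
  by move=> j /negbTE ->; rewrite !normal_setT mule1.
- have := ind (fun _ _ => setT) (fun _ _ => setT)
    (fun _ => setT) (fun j => if j == i then E else setT).
  move=> /(_ (fun _ _ => measurableT) (fun _ _ => measurableT)).
  move=> /(_ (fun _ => measurableT)) /(_ (fun j => ltac:(by case: ifP))).
  rewrite (_ : [set w | forall i0 j, setT (complex.Re (Hhat w i0 j)) /\
                                      setT (complex.Im (Hhat w i0 j))] = setT); last first.
    by apply/seteqP; split => w //=.
  rewrite setTI probability_setT mul1e.
  rewrite (_ : [set w | _] = (fun w => complex.Im (phi w i)) @^-1` E); last first.
    apply/seteqP; split => w /=.
      by move=> /(_ i); rewrite eqxx => -[].
    by move=> Ew j; split => //; case: ifP => // /eqP ->.
  move=> ->; rewrite (bigD1 i) //= eqxx big1 ?mule1 ?normal_setT ?mul1e //.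
  by move=> j /negbTE ->; rewrite !normal_setT mule1.
Qed.

Lemma gauss_Int (R : realType) (d : measure_display) (Omega : measurableType d)
  (P : probability Omega R) (X : Omega -> R) (w : R) : 0 < w ->
  measurable_fun setT X ->
  (forall E, measurable E -> P (X @^-1` E) = normal_prob 0 (Num.sqrt (w / 2)) E) ->
  P.-integrable setT (EFin \o (fun v => X v ^+ 2)).
Proof.
move=> w0 mX hX; apply: Int_of_fin => //.
- exact: measurable_funX.
- by move=> v; exact: sqr_ge0.
have mf : measurable_fun setT (fun y : R => (y ^+ 2)%:E).
  by apply/measurable_EFinP; exact: measurable_funX.
have mX' : measurable_fun [set: Omega] (X : Omega -> measurableTypeR R) := mX.
have mf' : measurable_fun [set: measurableTypeR R]
  (fun y : measurableTypeR R => ((y : R) ^+ 2)%:E) := mf.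
have e := @ge0_integral_pushforward _ _ Omega (measurableTypeR R) R X mX' P setT
  (fun y : measurableTypeR R => ((y : R) ^+ 2)%:E)
  measurableT mf' (fun y _ => sqr_ge0 (y : R)).
rewrite preimage_setT in e.
rewrite [X in (X < _)%E](_ : _ = \int[P]_x ((fun y : measurableTypeR R => ((y : R) ^+ 2)%:E) \o X) x)%E //.
rewrite -e.
rewrite (@eq_measure_integral _ _ _ setT (normal_prob 0 (Num.sqrt (w / 2)))
   (@measure_function_pushforward__canonical__measure_function_Measure _ _ _ _ _ P _ mX')).
  exact: normal_sq_fin.
by move=> A mA _; rewrite /pushforward; apply: hX.
Qed.


Lemma Re_add (R : rcfType) (x y : R[i]) :
  complex.Re (x + y) = complex.Re x + complex.Re y.
Proof. by case: x; case: y. Qed.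

Lemma Im_add (R : rcfType) (x y : R[i]) :
  complex.Im (x + y) = complex.Im x + complex.Im y.
Proof. by case: x; case: y. Qed.

Lemma log2_ge0 (R : realType) (x : R) : 1 <= x -> 0 <= log2 x.
Proof.
move=> x1; rewrite /log2 divr_ge0 //; first exact: ln_ge0.
by apply: ltW; apply: ln_gt0; rewrite ltr1n.
Qed.

Lemma log2_le (R : realType) (x y : R) : 0 < x -> x <= y -> log2 x <= log2 y.
Proof.
move=> x0 xy; rewrite /log2 ler_pM2r; last first.
  by rewrite invr_gt0; apply: ln_gt0; rewrite ltr1n.
by rewrite ler_ln // ?posrE // (lt_le_trans x0).
Qed.

Lemma final (R : realType) (K T : nat) (rb Pmax rho sigma2 delta2 E : R)
  (V : 'I_K -> R) :
  (0 < T)%N -> 0 < Pmax -> 0 < rho -> 0 < sigma2 -> 0 < delta2 ->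
  (forall m, 0 <= V m) -> (forall m, V m <= Pmax * E) ->
  rb - T%:R^-1 * \sum_(m < K) log2 (1 + T%:R * Pmax / delta2 * E) <=
  rb - T%:R^-1 * \sum_(m < K) log2 (1 + T%:R / (rho * sigma2 + delta2) * V m)
  <= rb.
Proof.
move=> T0 Pm0 r0 s0 d0 V0 VE.
have Ti : 0 < T%:R^-1 :> R by rewrite invr_gt0 ltr0n.
have c0 : 0 < T%:R / (rho * sigma2 + delta2) :> R.
  by rewrite divr_gt0 ?ltr0n // addr_gt0 // mulr_gt0.
apply/andP; split.
  rewrite lerD2l lerN2; apply: ler_wpM2l; first exact: ltW.
  apply: ler_sum => m _; apply: log2_le.
    by rewrite ltr_pwDl // mulr_ge0 // ltW.
  rewrite lerD2l.
  apply: (@le_trans _ _ (T%:R / delta2 * V m)).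
    apply: ler_wpM2r => //; apply: ler_wpM2l; first by rewrite ler0n.
    rewrite lef_pV2 ?posrE ?addr_gt0 ?mulr_gt0 //.
    by rewrite lerDr mulr_ge0 // ltW.
  rewrite (_ : T%:R * Pmax / delta2 * E = T%:R / delta2 * (Pmax * E)); last by ring.
  apply: ler_wpM2l => //.
  by rewrite divr_ge0 ?ler0n // ltW.
rewrite lerBlDr lerDl; apply: mulr_ge0; first exact: ltW.
apply: sumr_ge0 => m _; apply: log2_ge0.
by rewrite lerDl mulr_ge0 // ltW.
Qed.

Theorem proposition1 (R : realType) (M K T : nat) (k : 'I_K)
    (Pmax sigma2 delta2 omega2 rho : R)
    (d : measure_display) (Omega : measurableType d) (P : probability Omega R)
    (Hhat : Omega -> 'M[R[i]]_(M, K)) (phi : Omega -> 'I_M -> R[i])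
    (F : 'M[R[i]]_(M, K) -> 'M[R[i]]_(M, K)) :
  (0 < M)%N -> (0 < K)%N -> (0 < T)%N ->
  0 < Pmax -> 0 < sigma2 -> 0 < delta2 -> 0 < omega2 ->
  0 < rho <= 1 ->
  (forall i j, cmeasurable (fun w => Hhat w i j)) ->
  (forall i, cmeasurable (fun w => phi w i)) ->
  (forall i j, cmeasurable (fun w => F (Hhat w) i j)) ->
  (\int[P]_w (vnorm2 (fun i => Hhat w i k))%:E < +oo)%E ->
  indep_CN_noise P omega2 Hhat phi ->
  (forall H : 'M[R[i]]_(M, K), \tr (F H *m herm (F H)) <= Pmax%:C%C) ->
  let h w := fun i => Hhat w i k + phi w i in
  let g w m := cinner (h w) (fun i => F (Hhat w) i m) in
  let Gamma w := rho * csq (g w k) /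
      (rho * (\sum_(m < K | m != k) csq (g w m) + sigma2) + delta2) in
  let rbar := Ex P (fun w => log2 (1 + Gamma w)) in
  let rhat := rbar - T%:R^-1 * \sum_(m < K)
      log2 (1 + T%:R / (rho * sigma2 + delta2) * cVar P (fun w => g w m)) in
  rbar - T%:R^-1 * \sum_(m < K)
      log2 (1 + T%:R * Pmax / delta2 * Ex P (fun w => vnorm2 (h w)))
    <= rhat <= rbar.
Proof.
move=> M0 K0 T0 Pm0 s0 dl0 om0 /andP[rho0 rho1] mH mphi mF finH ind Fb.
pose h := fun w i => Hhat w i k + phi w i.
pose g := fun w m => cinner (h w) (fun i => F (Hhat w) i m).
have mReh i : measurable_fun setT (fun w => complex.Re (h w i)).
  rewrite (_ : (fun w => _) = fun w => complex.Re (Hhat w i k) + complex.Re (phi w i)).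
    by apply: measurable_funD; [case: (mH i k) | case: (mphi i)].
  by apply/funext => w; rewrite /h Re_add.
have mImh i : measurable_fun setT (fun w => complex.Im (h w i)).
  rewrite (_ : (fun w => _) = fun w => complex.Im (Hhat w i k) + complex.Im (phi w i)).
    by apply: measurable_funD; [case: (mH i k) | case: (mphi i)].
  by apply/funext => w; rewrite /h Im_add.
have mvh : measurable_fun setT (fun w => vnorm2 (h w)).
  rewrite /vnorm2 /csq; apply: measurable_sum => i.
  by apply: measurable_funD; apply: measurable_funX.
have mg m : cmeasurable (fun w => g w m).
  split.
  - rewrite (_ : (fun w => _) = fun w => \sum_(i < M) (complex.Re (h w i) *
        complex.Re (F (Hhat w) i m) + complex.Im (h w i) * complex.Im (F (Hhat w) i m))).
      apply: measurable_sum => i; apply: measurable_funD; apply: measurable_funM => //.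
      + by case: (mF i m).
      + by case: (mF i m).
    by apply/funext => w; rewrite /g /cinner Re_sum; apply: eq_bigr => i _; rewrite Re_conjM.
  - rewrite (_ : (fun w => _) = fun w => \sum_(i < M) (complex.Re (h w i) *
        complex.Im (F (Hhat w) i m) - complex.Im (h w i) * complex.Re (F (Hhat w) i m))).
      apply: measurable_sum => i; apply: measurable_funB; apply: measurable_funM => //.
      + by case: (mF i m).
      + by case: (mF i m).
    by apply/funext => w; rewrite /g /cinner Im_sum; apply: eq_bigr => i _; rewrite Im_conjM.
have iH : P.-integrable setT (EFin \o (fun w => vnorm2 (fun i => Hhat w i k))).
  apply: Int_of_fin => //.
  - rewrite /vnorm2 /csq; apply: measurable_sum => i.
    by apply: measurable_funD; apply: measurable_funX; case: (mH i k).
  - by move=> w; apply: sumr_ge0 => i _; exact: csq_ge0.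
have iphi i : P.-integrable setT (EFin \o (fun w => csq (phi w i))).
  have [dRe dIm] := @phi_dist _ _ _ P _ _ omega2 Hhat phi i ind.
  rewrite /csq; apply: IntD.
  - by apply: (@gauss_Int _ _ _ P _ omega2 om0) => //; case: (mphi i).
  - by apply: (@gauss_Int _ _ _ P _ omega2 om0) => //; case: (mphi i).
have ivh : P.-integrable setT (EFin \o (fun w => vnorm2 (h w))).
  apply: (@Int_bound _ _ _ P _ (fun w => 2 * vnorm2 (fun i => Hhat w i k) +
                                   2 * \sum_(i < M) csq (phi w i))) => //.
  - move=> w; rewrite ger0_norm; last by apply: sumr_ge0 => i _; exact: csq_ge0.
    rewrite /vnorm2 !mulr_sumr -big_split /=; apply: ler_sum => i _.
    rewrite /h /csq Re_add Im_add.
    have := sqr_ge0 (complex.Re (Hhat w i k) - complex.Re (phi w i)).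
    have := sqr_ge0 (complex.Im (Hhat w i k) - complex.Im (phi w i)).
    nra.
  - apply: IntD; apply: IntZ => //.
    by apply: Int_sum => i; exact: iphi.
have ptw w m : csq (g w m) <= Pmax * vnorm2 (h w).
  apply: le_trans (@cs_cinner _ _ (h w) (fun i => F (Hhat w) i m)) _.
  have hv : 0 <= vnorm2 (h w) by apply: sumr_ge0 => i _; exact: csq_ge0.
  have := @col_norm_le _ _ _ (F (Hhat w)) m _ (Fb (Hhat w)).
  nra.
have iZ m : P.-integrable setT (EFin \o (fun w => csq (g w m))).
  apply: (@Int_bound _ _ _ P _ (fun w => Pmax * vnorm2 (h w))).
  - case: (mg m) => mre mim; rewrite /csq.
    by apply: measurable_funD; apply: measurable_funX.
  - by move=> w; rewrite ger0_norm ?csq_ge0 // ptw.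
  - exact: IntZ.
have H1 m : 0 <= cVar P (fun w => g w m).
  by apply: Rintegral_ge0 => w _; exact: csq_ge0.
have H2 m : cVar P (fun w => g w m) <= Pmax * Ex P (fun w => vnorm2 (h w)).
  apply: le_trans (@cvar_le _ _ _ P _ (mg m) (iZ m)) _.
  rewrite /Ex -RintegralZl //; apply: le_Rintegral => //.
  all: try exact: IntZ.
  all: try by move=> w _; exact: ptw.
exact: (@final _ _ _ _ _ _ _ _ _ _ T0 Pm0 rho0 s0 dl0 H1 H2).
Qed.
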